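(* Assume $c_i=c>0$, $\gamma_i=\gamma>0$, $\nu_i=\nu>0$, $\rho_i=\rho\in(-1,1)$ for all $i$. Then the unique maximiser $(z^{Q,\star},z^{S,\star})$ of $f$ is symmetric: there are reals $z^\star_{s,n},z^\star_{d,n}$ and (for $n\ge2$) $z^\star_{o,n}$ with $z^{S,i,\star}=z^\star_{s,n}$, $z^{Q,i,i,\star}=z^\star_{d,n}$, $z^{Q,i,j,\star}=z^\star_{o,n}$ for $j\ne i$, and $\Delta_n(\gamma_{\rm P})>0$ and $$z^\star_{s,n}=-\frac{\rho\gamma}{Ac\sigma\nu\sqrt n\,\Delta_n(\gamma_{\rm P})}\Big(1-\frac{\gamma_{\rm P}}{n\widetilde\kappa_n}\Big),$$ $$z^\star_{o,n}=\frac1\nu\big(\alpha_nK_n^\star-\beta_nz^\star_{s,n}\big)\ (n\ge2),\qquad z^\star_{d,n}=\frac{1}{\nu A}\Big(\frac{\gamma_{\rm P}}{n}K_n^\star-\gamma\beta_nz^\star_{s,n}+\frac{1}{c\nu}\Big),$$ where $K_n^\star=\frac1{\kappa_n}\Big(\frac{\gamma\nu}{A}-\beta_n\delta z^\star_{s,n}\Big)$.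
   Context: Fix an integer $n\ge1$ and parameters $\sigma>0$, $\gamma_{\rm P}>0$, and for each $i\in\{1,\dots,n\}$: $c_i>0$, $\gamma_i>0$, $\nu_i>0$, $\rho_i\in(-1,1)$. Write $\nu=(\nu_1,\dots,\nu_n)^\top$, $\rho=(\rho_1,\dots,\rho_n)^\top$. The variables are a matrix $z^Q=(z^{Q,i,j})_{i,j}\in\mathbb{R}^{n\times n}$ ($i$ row, $j$ column) and a vector $z^S=(z^{S,1},\dots,z^{S,n})^\top\in\mathbb{R}^n$. Define $f:\mathbb{R}^{n\times n}\times\mathbb{R}^n\to\mathbb{R}$ by $$f(z^Q,z^S)=-\frac1n\sum_{i=1}^n\Big(\frac{(z^{Q,i,i})^2}{2c_i}+\frac{\gamma_i}{2}\sum_{j=1}^n\nu_j^2(z^{Q,i,j})^2+\frac{\gamma_i\sigma^2}{2}(z^{S,i})^2+\frac{\gamma_i\sigma}{\sqrt n}z^{S,i}\sum_{j=1}^n\rho_j\nu_jz^{Q,i,j}-\frac{z^{Q,i,i}}{c_i}\Big)-\frac{\gamma_{\rm P}}{2n^2}\sum_{i=1}^n\Big(\Big(\nu_i-\nu_i\sum_{j=1}^nz^{Q,j,i}-\frac{\rho_i\sigma}{\sqrt n}\sum_{j=1}^nz^{S,j}\Big)^2+\frac{(1-\rho_i^2)\sigma^2}{n}\Big(\sum_{j=1}^nz^{S,j}\Big)^2\Big).$$ $f$ has a unique global maximiser $(z^{Q,\star},z^{S,\star})$. In the homogeneous case define $A=\gamma+\frac{1}{c\nu^2}$, $\delta=1-\frac{\gamma}{A}=\frac{1}{Ac\nu^2}$,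 $\alpha_n=\frac{\gamma_{\rm P}}{n\gamma}$, $\beta_n=\frac{\sigma\rho}{\sqrt n}$, $\widetilde\kappa_n=A+\frac{\gamma_{\rm P}}{n}\Big(\frac{(n-1)A}{\gamma}+1\Big)$, $\kappa_n=\widetilde\kappa_n/A$, and $$\Delta_n(\gamma_{\rm P})=(\gamma+\gamma_{\rm P})(1-\rho^2)+\frac{\gamma\rho^2\delta}{n}+\frac{\gamma_{\rm P}\rho^2\delta^2}{n^2\kappa_n}.$$ *)

(* Defs.v *)
From HB Require Import structures.
From mathcomp Require Import all_boot all_order all_algebra.
From mathcomp Require Import reals.
Set Implicit Arguments. Unset Strict Implicit. Unset Printing Implicit Defensive.
Import Order.TTheory GRing.Theory Num.Theory.
Local Open Scope ring_scope.

Section Defs.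
Variable R : realType.

(* The objective f of the paper, with general (heterogeneous) parameters
   c, gam, nu, rho : 'I_n -> R.  zQ i j = z^{Q,i,j} (row i, column j),
   zS i 0 = z^{S,i}. *)
Definition fobj (n : nat) (sigma gP : R) (c gam nu rho : 'I_n -> R)
    (zQ : 'M[R]_n) (zS : 'cV[R]_n) : R :=
  - (n%:R)^-1 * \sum_(i < n)
      ( (zQ i i)^+2 / (2 * c i)
      + gam i / 2 * \sum_(j < n) (nu j)^+2 * (zQ i j)^+2
      + gam i * sigma^+2 / 2 * (zS i 0)^+2
      + gam i * sigma / Num.sqrt (n%:R) * zS i 0 *
          \sum_(j < n) rho j * nu j * zQ i j
      - zQ i i / c i )
  - gP / (2 * (n%:R)^+2) * \sum_(i < n)
      ( (nu i - nu i * (\sum_(j < n) zQ j i)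
               - rho i * sigma / Num.sqrt (n%:R) * \sum_(j < n) zS j 0)^+2
      + (1 - (rho i)^+2) * sigma^+2 / n%:R * (\sum_(j < n) zS j 0)^+2 ).

Definition is_global_max (n : nat) (g : 'M[R]_n -> 'cV[R]_n -> R)
    (zQ : 'M[R]_n) (zS : 'cV[R]_n) : Prop :=
  forall (wQ : 'M[R]_n) (wS : 'cV[R]_n), g wQ wS <= g zQ zS.

Definition hA (c gam nu : R) : R := gam + (c * nu^+2)^-1.
Definition hdelta (c gam nu : R) : R := 1 - gam / hA c gam nu.
Definition halpha (n : nat) (gam gP : R) : R := gP / (n%:R * gam).
Definition hbeta (n : nat) (sigma rho : R) : R := sigma * rho / Num.sqrt (n%:R).
Definition hkappat (n : nat) (c gam nu gP : R) : R :=
  hA c gam nu + gP / n%:R * ((n%:R - 1) * hA c gam nu / gam + 1).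
Definition hkappa (n : nat) (c gam nu gP : R) : R :=
  hkappat n c gam nu gP / hA c gam nu.
Definition hDelta (n : nat) (c gam nu rho gP : R) : R :=
  (gam + gP) * (1 - rho^+2) + gam * rho^+2 * hdelta c gam nu / n%:R
  + gP * rho^+2 * (hdelta c gam nu)^+2 / ((n%:R)^+2 * hkappa n c gam nu gP).

Definition zs_star (n : nat) (sigma c gam nu rho gP : R) : R :=
  - (rho * gam) / (hA c gam nu * c * sigma * nu * Num.sqrt (n%:R)
                   * hDelta n c gam nu rho gP)
  * (1 - gP / (n%:R * hkappat n c gam nu gP)).
Definition K_star (n : nat) (sigma c gam nu rho gP : R) : R :=
  (hkappa n c gam nu gP)^-1 *
  (gam * nu / hA c gam nu
   - hbeta n sigma rho * hdelta c gam nu * zs_star n sigma c gam nu rho gP).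
Definition zo_star (n : nat) (sigma c gam nu rho gP : R) : R :=
  nu^-1 * (halpha n gam gP * K_star n sigma c gam nu rho gP
           - hbeta n sigma rho * zs_star n sigma c gam nu rho gP).
Definition zd_star (n : nat) (sigma c gam nu rho gP : R) : R :=
  (nu * hA c gam nu)^-1 *
  (gP / n%:R * K_star n sigma c gam nu rho gP
   - gam * hbeta n sigma rho * zs_star n sigma c gam nu rho gP
   + (c * nu)^-1).
End Defs.

(* Main.v *)
Require Import Defs.
From HB Require Import structures.
From mathcomp Require Import all_boot all_order all_algebra.
From mathcomp Require Import reals ring lra.
From Stdlib Require Import FunctionalExtensionality.
Import Order.TTheory GRing.Theory Num.Theory.
Local Open Scope ring_scope.

Lemma sum_delta (R : pzRingType) n (i : 'I_n) (F : 'I_n -> R) :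
  \sum_(j < n) (i == j)%:R * F j = F i.
Proof.
rewrite (bigD1 i) //= eqxx mul1r big1 ?addr0 // => j; rewrite eq_sym => /negbTE ->.
by rewrite mul0r.
Qed.

Lemma posEk (R : realFieldType) (g gP p r2 : R) : 0 < g -> 0 < gP -> 0 < p -> 1 <= r2 ->
  0 < (g * p + 1) * (r2 * g) + gP * ((r2 - 1) * (g * p + 1) + p * g).
Proof.
move=> hg hgP hp hr.
have hq : 0 < g * p + 1 by have := mulr_gt0 hg hp; lra.
have h1 : 0 < (g * p + 1) * (r2 * g) by rewrite mulr_gt0 // mulr_gt0 //; lra.
have h2 : 0 <= (r2 - 1) * (g * p + 1) by rewrite mulr_ge0 //; lra.
have h3 : 0 < (r2 - 1) * (g * p + 1) + p * g by have := mulr_gt0 hp hg; lra.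
have := mulr_gt0 hgP h3; lra.
Qed.
Lemma posD (R : realFieldType) (g gP rho p r2 : R) : 0 < g -> 0 < gP -> 0 < p ->
  0 < 1 - rho ^+ 2 -> 1 <= r2 ->
  0 < ((g + gP) * (1 - rho ^+ 2) * ((g * p + 1) * r2) +
       g * rho ^+ 2 * (g * p + 1 - g * p)) *
      ((g * p + 1) * (r2 * g) + gP * ((r2 - 1) * (g * p + 1) + p * g)) +
      gP * rho ^+ 2 * (g * p + 1 - g * p) ^+ 2 * g.
Proof.
move=> hg hgP hp hrho hr.
have -> : g * p + 1 - g * p = 1 by ring.
have hE := @posEk R g gP p r2 hg hgP hp hr.
have hq : 0 < g * p + 1 by have := mulr_gt0 hg hp; lra.
have h1 : 0 < (g + gP) * (1 - rho ^+ 2) * ((g * p + 1) * r2).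
  by rewrite !mulr_gt0 //; lra.
have h2 : 0 <= g * rho ^+ 2 * 1 by rewrite mulr1 mulr_ge0 ?sqr_ge0 //; lra.
have h3 : 0 <= gP * rho ^+ 2 * 1 ^+ 2 * g.
  by rewrite expr1n mulr1; apply: mulr_ge0; [apply: mulr_ge0; [lra | exact: sqr_ge0] | lra].
have h4 : 0 < (g + gP) * (1 - rho ^+ 2) * ((g * p + 1) * r2) + g * rho ^+ 2 * 1 by lra.
have := mulr_gt0 h4 hE; lra.
Qed.

Section Main.
Variables (R : realType) (n : nat) (sigma gP c gam nu rho : R).
Hypotheses (n0 : (0 < n)%N) (hs : 0 < sigma) (hgP : 0 < gP) (hc : 0 < c)
  (hg : 0 < gam) (hnu : 0 < nu) (hr1 : -1 < rho) (hr2 : rho < 1).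
Local Notation N := (n%:R : R).
Local Notation r := (Num.sqrt (n%:R : R)).

Lemma N_gt0 : 0 < N. Proof. by rewrite ltr0n. Qed.
Lemma r_gt0 : 0 < r. Proof. by rewrite sqrtr_gt0 N_gt0. Qed.
Lemma rN : r ^+ 2 = N. Proof. by rewrite sqr_sqrtr // ler0n. Qed.

Ltac gen_r := have := r_gt0; have := rN;
  move: (Num.sqrt (n%:R : R)) => r0 <- hr0.

Definition phi x k := gam/2*((nu*x + rho*sigma/r*k)^+2 + (1-rho^+2)*sigma^+2/N*k^+2).

Lemma sum_phi (x : 'I_n -> R) k :
  \sum_(j < n) phi (x j) k = gam*nu^+2/2 * \sum_(j < n) x j ^+2
     + gam*sigma*rho*nu/r*k* \sum_(j < n) x j + gam*sigma^+2/2*k^+2.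
Proof.
rewrite (eq_bigr (fun j => gam*nu^+2/2 * x j ^+2 + gam*sigma*rho*nu/r*k * x j
   + gam*sigma^+2/(2*N) * k^+2)); last first.
  move=> j _; rewrite /phi; gen_r; field.
  by rewrite gt_eqF.
rewrite big_split big_split /= sumr_const card_ord -!mulr_sumr.
rewrite -[(_ * k ^+ 2) *+ n]mulr_natr.
gen_r; field; by rewrite gt_eqF.
Qed.

Lemma sum_const_N (a : R) : \sum_(j < n) a = N * a.
Proof. by rewrite sumr_const card_ord mulr_natl. Qed.

Lemma sum_row_sq d o (x : 'I_n -> R) i :
  \sum_(j < n) (o + (i == j)%:R * (d - o) + x j) ^+ 2
  = d^+2 + (N - 1) * o^+2 + 2 * ((d - o) * x i + o * \sum_(j < n) x j)
    + \sum_(j < n) x j ^+ 2.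
Proof.
rewrite (eq_bigr (fun j => (o^+2 + 2*o*x j + x j^+2)
   + (i == j)%:R * ((d-o)^+2 + 2*(d-o)*(o + x j)))); last first.
  by move=> j _; case: (i == j) => /=; ring.
rewrite big_split /= sum_delta big_split big_split /= sum_const_N -!mulr_sumr.
ring.
Qed.

Lemma sum_row d o (x : 'I_n -> R) i :
  \sum_(j < n) (o + (i == j)%:R * (d - o) + x j)
  = d + (N - 1) * o + \sum_(j < n) x j.
Proof.
rewrite big_split big_split /= sum_delta sum_const_N; ring.
Qed.

Definition Tq d o := d + (N-1)*o.
Definition Xs d o s := d^+2/(2*c) + gam/2*(nu^+2*(d^+2 + (N-1)*o^+2))
  + gam*sigma^+2/2*s^+2 + gam*sigma/r*s*(rho*nu*Tq d o) - d/c.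
Definition c1 d o := d/c + gam*nu^+2*(d-o) - 1/c.
Definition c2 o s := gam*nu^+2*o + gam*sigma*rho*nu*s/r.
Definition c3 d o s := gam*sigma^+2*s + gam*sigma*rho*nu*Tq d o/r.
Definition Ee d o s := nu - nu*Tq d o - rho*sigma/r*(N*s).
Definition Ys d o s := Ee d o s^+2 + (1-rho^+2)*sigma^+2/N*(N*s)^+2.
Definition e1 d o s := -2*Ee d o s*nu.
Definition e2 d o s := -2*Ee d o s*rho*sigma/r + 2*(1-rho^+2)*sigma^+2/N*(N*s).
Definition Y2 H K := (nu*H + rho*sigma/r*K)^+2 + (1-rho^+2)*sigma^+2/N*K^+2.

Lemma rowX d o s (wQ : 'M[R]_n) (wS : 'cV[R]_n) h k
  (hQ : forall i j, wQ i j = o + (i == j)%:R * (d - o) + h i j)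
  (hS : forall i, wS i 0 = s + k i) i :
  wQ i i ^+ 2 / (2 * c) + gam / 2 * \sum_(j < n) nu ^+ 2 * wQ i j ^+ 2
  + gam * sigma ^+ 2 / 2 * wS i 0 ^+ 2
  + gam * sigma / r * wS i 0 * \sum_(j < n) rho * nu * wQ i j - wQ i i / c
  = Xs d o s + (h i i ^+ 2 / (2 * c) + \sum_(j < n) phi (h i j) (k i))
    + c1 d o * h i i + c2 o s * \sum_(j < n) h i j + c3 d o s * k i.
Proof.
have E1 : wQ i i = d + h i i by rewrite hQ eqxx /=; ring.
have E2 : \sum_(j < n) nu ^+ 2 * wQ i j ^+ 2 = nu^+2 * (d^+2 + (N - 1) * o^+2
    + 2 * ((d - o) * h i i + o * \sum_(j < n) h i j) + \sum_(j < n) h i j ^+ 2).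
  by rewrite -mulr_sumr -(sum_row_sq d o _ i); congr (_ * _); apply: eq_bigr => j _; rewrite hQ.
have E3 : \sum_(j < n) rho * nu * wQ i j = rho * nu * (d + (N - 1) * o + \sum_(j < n) h i j).
  by rewrite -mulr_sumr -(sum_row d o _ i); congr (_ * _); apply: eq_bigr => j _; rewrite hQ.
rewrite E2 E3 E1 hS sum_phi /Xs /c1 /c2 /c3 /Tq.
have := hc; gen_r; move=> hc'; field.
by rewrite !gt_eqF.
Qed.

Lemma rowY d o s (wQ : 'M[R]_n) (wS : 'cV[R]_n) h k
  (hQ : forall i j, wQ i j = o + (i == j)%:R * (d - o) + h i j)
  (hS : forall i, wS i 0 = s + k i) i :
  (nu - nu * (\sum_(j < n) wQ j i) - rho * sigma / r * \sum_(j < n) wS j 0)^+2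
  + (1 - rho^+2) * sigma^+2 / N * (\sum_(j < n) wS j 0)^+2
  = Ys d o s + Y2 (\sum_(j < n) h j i) (\sum_(j < n) k j)
    + e1 d o s * \sum_(j < n) h j i + e2 d o s * \sum_(j < n) k j.
Proof.
have E1 : \sum_(j < n) wQ j i = d + (N - 1) * o + \sum_(j < n) h j i.
  by rewrite -(sum_row d o _ i); apply: eq_bigr => j _; rewrite hQ eq_sym.
have E2 : \sum_(j < n) wS j 0 = N * s + \sum_(j < n) k j.
  by rewrite -sum_const_N -big_split; apply: eq_bigr => j _; rewrite hS.
rewrite E1 E2 /Ys /Y2 /e1 /e2 /Ee /Tq.
gen_r; field.
by rewrite !gt_eqF.
Qed.

Lemma sum5 (X c1' c2' c3' : R) (A B C D : 'I_n -> R) :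
  \sum_(i < n) (X + A i + c1' * B i + c2' * C i + c3' * D i)
  = N * X + \sum_(i < n) A i + c1' * \sum_(i < n) B i + c2' * \sum_(i < n) C i
    + c3' * \sum_(i < n) D i.
Proof. by rewrite !big_split /= sum_const_N -!mulr_sumr. Qed.

Lemma sum4 (X e1' e2' K : R) (A C : 'I_n -> R) :
  \sum_(i < n) (X + A i + e1' * C i + e2' * K)
  = N * X + \sum_(i < n) A i + e1' * \sum_(i < n) C i + N * (e2' * K).
Proof. by rewrite !big_split /= !sum_const_N -!mulr_sumr. Qed.

Definition qf (h : 'I_n -> 'I_n -> R) (k : 'I_n -> R) :=
  N^-1 * \sum_(i < n) (h i i ^+ 2 / (2 * c) + \sum_(j < n) phi (h i j) (k i))
  + gP / (2 * N^+2) * \sum_(i < n) Y2 (\sum_(j < n) h j i) (\sum_(j < n) k j).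
Definition C0 d o s := - N^-1 * (N * Xs d o s) - gP / (2 * N^+2) * (N * Ys d o s).
Definition l1 d o := - N^-1 * c1 d o.
Definition l2 d o s := - N^-1 * c2 o s - gP / (2 * N^+2) * e1 d o s.
Definition l3 d o s := - N^-1 * c3 d o s - gP / (2 * N^+2) * (N * e2 d o s).

Lemma fid d o s (wQ : 'M[R]_n) (wS : 'cV[R]_n) h k
  (hQ : forall i j, wQ i j = o + (i == j)%:R * (d - o) + h i j)
  (hS : forall i, wS i 0 = s + k i) :
  fobj sigma gP (fun _ => c) (fun _ => gam) (fun _ => nu) (fun _ => rho) wQ wS
  = C0 d o s - qf h k + (l1 d o * \sum_(i < n) h i i
      + l2 d o s * \sum_(i < n) \sum_(j < n) h i j + l3 d o s * \sum_(i < n) k i).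
Proof.
rewrite /fobj /=.
rewrite (eq_bigr _ (fun i _ => @rowX d o s wQ wS h k hQ hS i)) (eq_bigr _ (fun i _ => @rowY d o s wQ wS h k hQ hS i)).
rewrite sum5 sum4.
rewrite /qf /C0 /l1 /l2 /l3.
have := N_gt0; move: (N) => N0 hN0.
set T1 := (\sum_(i < n) \sum_(j < n) h j i).
set T2 := (\sum_(i < n) k i).
set T3 := \sum_(i < n) (h i i ^+ 2 / (2 * c) + _).
set T4 := \sum_(i < n) Y2 _ _.
set T5 := \sum_(i < n) h i i.
have -> : \sum_(i < n) \sum_(j < n) h i j = T1 by rewrite /T1 exchange_big.
field.
by rewrite gt_eqF.
Qed.

Lemma rho_pos : 0 < 1 - rho ^+ 2.
Proof.
have h1 : 0 < 1 - rho by rewrite subr_gt0.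
have h2 : 0 < 1 + rho by rewrite addrC -[1]opprK subr_gt0.
have -> : 1 - rho ^+ 2 = (1 - rho) * (1 + rho) by ring.
exact: mulr_gt0.
Qed.

Lemma bcoef_pos : 0 < (1 - rho ^+ 2) * sigma ^+ 2 / N.
Proof.
by rewrite divr_gt0 ?N_gt0 // mulr_gt0 ?rho_pos // exprn_gt0.
Qed.

Lemma Y2_ge0 H K : 0 <= Y2 H K.
Proof.
apply: addr_ge0; first exact: sqr_ge0.
apply: mulr_ge0; [exact: ltW bcoef_pos | exact: sqr_ge0].
Qed.

Lemma phi_ge0 x k : 0 <= phi x k.
Proof.
apply: mulr_ge0; first by apply: divr_ge0; rewrite ?ltW.
apply: addr_ge0; first exact: sqr_ge0.
apply: mulr_ge0; [exact: ltW bcoef_pos | exact: sqr_ge0].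
Qed.

Lemma phi_eq0 x k : phi x k = 0 -> x = 0 /\ k = 0.
Proof.
have hb := bcoef_pos.
have hg2 : gam / 2 != 0 by rewrite lt0r_neq0 // divr_gt0.
rewrite /phi => /eqP; rewrite mulf_eq0 (negbTE hg2) /=.
rewrite (paddr_eq0 (sqr_ge0 _) (mulr_ge0 (ltW hb) (sqr_ge0 k))).
case/andP=> /eqP h1; rewrite mulf_eq0 (negbTE (lt0r_neq0 hb)) /= sqrf_eq0 => /eqP hk.
move: h1; rewrite hk mulr0 addr0 => /eqP; rewrite sqrf_eq0 mulf_eq0 (negbTE (lt0r_neq0 hnu)) /=.
by move=> /eqP ->.
Qed.

Lemma X2_ge0 (h : 'I_n -> 'I_n -> R) k i :
  0 <= h i i ^+ 2 / (2 * c) + \sum_(j < n) phi (h i j) (k i).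
Proof.
apply: addr_ge0; last by apply: sumr_ge0 => j _; exact: phi_ge0.
apply: divr_ge0; first exact: sqr_ge0.
by apply: mulr_ge0; rewrite ?ltW.
Qed.

Lemma S2_ge0 (h : 'I_n -> 'I_n -> R) (k : 'I_n -> R) :
  0 <= gP / (2 * N ^+ 2) * \sum_(i < n) Y2 (\sum_(j < n) h j i) (\sum_(j < n) k j).
Proof.
apply: mulr_ge0; last by apply: sumr_ge0 => i _; exact: Y2_ge0.
apply: divr_ge0; first exact: ltW.
apply: mulr_ge0; [by [] | exact: sqr_ge0].
Qed.

Lemma S1_ge0 (h : 'I_n -> 'I_n -> R) (k : 'I_n -> R) :
  0 <= N^-1 * \sum_(i < n) (h i i ^+ 2 / (2 * c) + \sum_(j < n) phi (h i j) (k i)).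
Proof.
apply: mulr_ge0; last by apply: sumr_ge0 => i _; exact: X2_ge0.
by rewrite invr_ge0 ltW // N_gt0.
Qed.

Lemma qf_ge0 h k : 0 <= qf h k.
Proof. exact: addr_ge0 (S1_ge0 h k) (S2_ge0 h k). Qed.

Lemma qf_eq0 h k : qf h k = 0 -> (forall i j, h i j = 0) /\ (forall i, k i = 0).
Proof.
have hN := N_gt0.
rewrite /qf => /eqP; rewrite (paddr_eq0 (S1_ge0 h k) (S2_ge0 h k)).
case/andP; rewrite mulf_eq0 invr_eq0 (negbTE (lt0r_neq0 hN)) /= => /eqP hS _.
have H1 := psumr_eq0P (fun i _ => X2_ge0 h k i) hS.
have H2 : forall i j, phi (h i j) (k i) = 0.
  move=> i j; have /eqP := H1 i isT.
  rewrite paddr_eq0; last by apply: sumr_ge0 => l _; exact: phi_ge0.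
    case/andP=> _ /eqP hs2.
    exact: (psumr_eq0P (fun l _ => phi_ge0 (h i l) (k i)) hs2).
  apply: divr_ge0; first exact: sqr_ge0.
  by apply: mulr_ge0; rewrite ?ltW.
split; first by move=> i j; case: (phi_eq0 _ _ (H2 i j)).
by move=> i; case: (phi_eq0 _ _ (H2 i i)).
Qed.

Lemma qf0 : qf (fun _ _ => 0) (fun _ => 0) = 0.
Proof.
rewrite /qf.
have E1 : \sum_(i < n) Y2 (\sum_(j < n) (fun _ _ => 0 : R) j i) (\sum_(j < n) (fun _ => 0 : R) j) = 0.
  apply: big1 => i _; rewrite !big1_eq /Y2; ring.
have E2 : \sum_(i < n) ((fun _ _ => 0 : R) i i ^+ 2 / (2 * c)
   + \sum_(j < n) phi ((fun _ _ => 0 : R) i j) ((fun _ => 0 : R) i)) = 0.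
  apply: big1 => i _; rewrite big1 /=; first by rewrite expr0n /= mul0r addr0.
  by move=> j _; rewrite /phi; ring.
by rewrite E1 E2 !mulr0 addr0.
Qed.


Lemma N_ge1 : 1 <= N. Proof. by rewrite ler1n. Qed.
Lemma cnu_pos : 0 < c * nu ^+ 2. Proof. by rewrite mulr_gt0 // exprn_gt0. Qed.

Lemma c1_0 : c1 (zd_star n sigma c gam nu rho gP) (zo_star n sigma c gam nu rho gP) = 0.
Proof.
rewrite /c1 /zd_star /zo_star /K_star /halpha /hbeta /hkappa /hkappat /hdelta.
move: (zs_star _ _ _ _ _ _ _) => z.
rewrite /hA.
move: N_ge1; gen_r; move=> hN1.
field.
have P1 := @posEk R gam gP (c * nu ^+ 2) (r0 ^+ 2) hg hgP cnu_pos hN1.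
have P2 := @posD R gam gP rho (c * nu ^+ 2) (r0 ^+ 2) hg hgP cnu_pos rho_pos hN1.
have P3 : 0 < gam * (c * nu ^+ 2) + 1 by have := mulr_gt0 hg cnu_pos; move=> ?; apply: ltr_wpDl; [apply: ltW|].
rewrite !gt_eqF //.
Qed.
Lemma l2_0 : l2 (zd_star n sigma c gam nu rho gP) (zo_star n sigma c gam nu rho gP) (zs_star n sigma c gam nu rho gP) = 0.
Proof.
rewrite /l2 /c2 /e1 /Ee /Tq /zd_star /zo_star /K_star /halpha /hbeta /hkappa /hkappat /hdelta /zs_star /hDelta /hkappa /hkappat /hdelta.
rewrite /hA.
move: N_ge1; gen_r; move=> hN1.
field.
have P1 := @posEk R gam gP (c * nu ^+ 2) (r0 ^+ 2) hg hgP cnu_pos hN1.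
have P2 := @posD R gam gP rho (c * nu ^+ 2) (r0 ^+ 2) hg hgP cnu_pos rho_pos hN1.
have P3 : 0 < gam * (c * nu ^+ 2) + 1 by have := mulr_gt0 hg cnu_pos; move=> ?; apply: ltr_wpDl; [apply: ltW|].
rewrite !gt_eqF //.
Qed.
Lemma l3_0 : l3 (zd_star n sigma c gam nu rho gP) (zo_star n sigma c gam nu rho gP) (zs_star n sigma c gam nu rho gP) = 0.
Proof.
rewrite /l3 /c3 /e2 /Ee /Tq /zd_star /zo_star /K_star /halpha /hbeta /hkappa /hkappat /hdelta /zs_star /hDelta /hkappa /hkappat /hdelta.
rewrite /hA.
move: N_ge1; gen_r; move=> hN1.
field.
have P1 := @posEk R gam gP (c * nu ^+ 2) (r0 ^+ 2) hg hgP cnu_pos hN1.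
have P2 := @posD R gam gP rho (c * nu ^+ 2) (r0 ^+ 2) hg hgP cnu_pos rho_pos hN1.
have P3 : 0 < gam * (c * nu ^+ 2) + 1 by have := mulr_gt0 hg cnu_pos; move=> ?; apply: ltr_wpDl; [apply: ltW|].
rewrite !gt_eqF //.
Qed.

Lemma hA_pos : 0 < hA c gam nu.
Proof. by rewrite /hA addr_gt0 // invr_gt0 cnu_pos. Qed.

Lemma hdelta_ge0 : 0 <= hdelta c gam nu.
Proof.
have hA := hA_pos.
rewrite /hdelta subr_ge0 ler_pdivrMr // mul1r /hA lerDl invr_ge0 ltW //.
exact: cnu_pos.
Qed.

Lemma hkappat_pos : 0 < hkappat n c gam nu gP.
Proof.
have hA := hA_pos; have hN := N_gt0; have hN1 := N_ge1.
rewrite /hkappat; apply: ltr_wpDr => //; apply: mulr_ge0; first by rewrite divr_ge0 ?ltW.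
apply: addr_ge0 => //; apply: divr_ge0; last exact: ltW.
by apply: mulr_ge0; rewrite ?subr_ge0 // ltW.
Qed.

Lemma hkappa_pos : 0 < hkappa n c gam nu gP.
Proof. by rewrite /hkappa divr_gt0 ?hkappat_pos ?hA_pos. Qed.

Lemma Delta_pos : 0 < hDelta n c gam nu rho gP.
Proof.
have hd := hdelta_ge0; have hk := hkappa_pos; have hN := N_gt0.
rewrite /hDelta.
apply: ltr_wpDr.
  exact: divr_ge0 (mulr_ge0 (mulr_ge0 (ltW hgP) (sqr_ge0 rho)) (sqr_ge0 _))
                  (mulr_ge0 (sqr_ge0 _) (ltW hk)).
apply: ltr_wpDr.
  exact: divr_ge0 (mulr_ge0 (mulr_ge0 (ltW hg) (sqr_ge0 rho)) hd) (ltW hN).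
exact: mulr_gt0 (addr_gt0 hg hgP) rho_pos.
Qed.

Lemma main_sec :
  let f := fobj sigma gP (fun _ => c) (fun _ => gam) (fun _ => nu) (fun _ => rho) in
  let zs := zs_star n sigma c gam nu rho gP in
  let zd := zd_star n sigma c gam nu rho gP in
  let zo := zo_star n sigma c gam nu rho gP in
  0 < hDelta n c gam nu rho gP /\
  (forall (zQ : 'M[R]_n) (zS : 'cV[R]_n),
     is_global_max f zQ zS <->
     ((forall i : 'I_n, zS i 0 = zs) /\
      (forall i : 'I_n, zQ i i = zd) /\
      (forall i j : 'I_n, i != j -> zQ i j = zo))).
Proof.
move=> f s d o.
split; first exact: Delta_pos.
have key : forall wQ wS, f wQ wS = C0 d o s
   - qf (fun i j => wQ i j - (o + (i == j)%:R * (d - o))) (fun i => wS i 0 - s).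
  move=> wQ wS.
  rewrite /f (@fid d o s wQ wS (fun i j => wQ i j - (o + (i == j)%:R * (d - o)))
     (fun i => wS i 0 - s)); last 2 first.
  - by move=> i j; ring.
  - by move=> i; ring.
  rewrite /l1 /d /o /s c1_0 l2_0 l3_0; ring.
have key0 : forall (wQ : 'M[R]_n) (wS : 'cV[R]_n), (forall i j, wQ i j = o + (i == j)%:R * (d - o)) ->
    (forall i, wS i 0 = s) -> f wQ wS = C0 d o s.
  move=> wQ wS HQ HS; rewrite key.
  have -> : (fun i j => wQ i j - (o + (i == j)%:R * (d - o))) = (fun _ _ => 0).
    by apply: functional_extensionality => i; apply: functional_extensionality => j;
       rewrite HQ subrr.
  have -> : (fun i => wS i 0 - s) = (fun _ => 0).
    by apply: functional_extensionality => i; rewrite HS subrr.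
  by rewrite qf0 subr0.
move=> zQ zS; split.
- move=> hmax.
  have Hm := hmax (\matrix_(i, j) (o + (i == j)%:R * (d - o))) (\col_i s).
  rewrite (key0 (\matrix_(i, j) (o + (i == j)%:R * (d - o))) (\col_i s)) in Hm;
    last 2 first.
  + by move=> i j; rewrite mxE.
  + by move=> i; rewrite mxE.
  rewrite key in Hm.
  set q := qf _ _ in Hm.
  have hq0 : q = 0.
    apply/eqP; rewrite eq_le qf_ge0 andbT.
    by move: Hm; rewrite -subr_ge0 addrAC subrr add0r oppr_ge0.
  case: (qf_eq0 _ _ hq0) => Hh Hk.
  split; [|split].
  + by move=> i; apply/eqP; rewrite -subr_eq0; apply/eqP; exact: Hk.
  + move=> i; have := Hh i i; rewrite eqxx /= => /eqP; rewrite subr_eq0 => /eqP ->; ring.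
  + move=> i j hij; have := Hh i j; rewrite (negbTE hij) /= => /eqP; rewrite subr_eq0 => /eqP ->; ring.
- case=> HS [HD HO] wQ wS.
  rewrite (key0 zQ zS); last 2 first.
  + move=> i j; case: (eqVneq i j) => [<-|hij]; first by rewrite HD /=; ring.
    by rewrite HO //=; ring.
  + by [].
  by rewrite key lerBlDr lerDl qf_ge0.
Qed.
End Main.

Theorem mainTheorem2 (R : realType) (n : nat) (sigma gP c gam nu rho : R) :
  (0 < n)%N -> 0 < sigma -> 0 < gP -> 0 < c -> 0 < gam -> 0 < nu ->
  -1 < rho -> rho < 1 ->
  let f := fobj sigma gP (fun _ => c) (fun _ => gam) (fun _ => nu) (fun _ => rho) in
  let zs := zs_star n sigma c gam nu rho gP in
  let zd := zd_star n sigma c gam nu rho gP in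
  let zo := zo_star n sigma c gam nu rho gP in
  0 < hDelta n c gam nu rho gP /\
  (forall (zQ : 'M[R]_n) (zS : 'cV[R]_n),
     is_global_max f zQ zS <->
     ((forall i : 'I_n, zS i 0 = zs) /\
      (forall i : 'I_n, zQ i i = zd) /\
      (forall i j : 'I_n, i != j -> zQ i j = zo))).
Proof. exact: main_sec. Qed.
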